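(* Let $b>0$ and $\varepsilon\in\mathbb{R}$. If $u(t,x)$ solves $u_t=xu_{xx}+bu_x$, then $$\tilde u_\varepsilon(t,x)=(1+\varepsilon t)^{-b}\exp\!\left(\frac{-\varepsilon x}{1+\varepsilon t}\right)u\!\left(\frac{t}{1+\varepsilon t},\ \frac{x}{(1+\varepsilon t)^2}\right)$$ is also a solution wherever $1+\varepsilon t>0$ and the argument lies in the domain of $u$. In particular, for constants $c_0,c_1$, $$u_\varepsilon(t,x)=(1+\varepsilon t)^{-b}\exp\!\left(\frac{-\varepsilon x}{1+\varepsilon t}\right)\left[c_0+c_1(1+\varepsilon t)^{2(b-1)}x^{1-b}\right]\ (b\neq1),$$ $$u_\varepsilon(t,x)=(1+\varepsilon t)^{-1}\exp\!\left(\frac{-\varepsilon x}{1+\varepsilon t}\right)\left[c_0+c_1\log\frac{\sqrt x}{1+\varepsilon t}\right]\ (b=1),$$ are solutions for $x>0$, $1+\varepsilon t>0$. *)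

(* Defs.v *)
From Stdlib Require Import Reals.
Open Scope R_scope.

Definition open2 (D : R -> R -> Prop) : Prop :=
  forall t x, D t x -> exists d, 0 < d /\
    forall s y, Rabs (s - t) < d -> Rabs (y - x) < d -> D s y.

Definition cont2_at (f : R -> R -> R) (t x : R) : Prop :=
  forall e, 0 < e -> exists d, 0 < d /\
    forall s y, Rabs (s - t) < d -> Rabs (y - x) < d ->
      Rabs (f s y - f t x) < e.

Definition is_solution (b : R) (D : R -> R -> Prop) (u : R -> R -> R) : Prop :=
  exists ut ux uxx : R -> R -> R,
    forall t x, D t x ->
      derivable_pt_lim (fun s => u s x) t (ut t x) /\
      derivable_pt_lim (fun y => u t y) x (ux t x) /\
      derivable_pt_lim (fun y => ux t y) x (uxx t x) /\
      cont2_at ut t x /\ cont2_at ux t x /\ cont2_at uxx t x /\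
      ut t x = x * uxx t x + b * ux t x.

Definition transf (b eps : R) (u : R -> R -> R) (t x : R) : R :=
  Rpower (1 + eps * t) (- b) * exp (- eps * x / (1 + eps * t))
  * u (t / (1 + eps * t)) (x / (1 + eps * t) ^ 2).

Definition transf_dom (eps : R) (D : R -> R -> Prop) (t x : R) : Prop :=
  0 < 1 + eps * t /\ D (t / (1 + eps * t)) (x / (1 + eps * t) ^ 2).

(* Main.v *)
Require Import Defs.
From Stdlib Require Import Reals Lra.
From Coquelicot Require Import Coquelicot.
Open Scope R_scope.

Lemma cont2_iff f t x : cont2_at f t x <-> continuity_2d_pt f t x.
Proof.
split.
- intros H eps; destruct (H eps (cond_pos eps)) as [d [Hd H']].
  exists (mkposreal d Hd); exact H'.
- intros H e He; destruct (H (mkposreal e He)) as [d H'].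
  exists d; split; [apply cond_pos | exact H'].
Qed.

Lemma c2_comp (F g h : R -> R -> R) t x :
  continuity_2d_pt F (g t x) (h t x) -> continuity_2d_pt g t x ->
  continuity_2d_pt h t x -> continuity_2d_pt (fun s y => F (g s y) (h s y)) t x.
Proof.
intros HF Hg Hh eps. destruct (HF eps) as [d1 H1].
destruct (Hg d1) as [d2 H2]. destruct (Hh d1) as [d3 H3].
assert (Hp : 0 < Rmin d2 d3) by (apply Rmin_pos; apply cond_pos).
exists (mkposreal _ Hp); simpl; intros s y Hs Hy.
apply H1.
- apply H2; eapply Rlt_le_trans; eauto; apply Rmin_l.
- apply H3; eapply Rlt_le_trans; eauto; apply Rmin_r.
Qed.

Lemma c2_div (f g : R -> R -> R) t x : continuity_2d_pt f t x ->
  continuity_2d_pt g t x -> g t x <> 0 ->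
  continuity_2d_pt (fun s y => f s y / g s y) t x.
Proof.
intros; apply continuity_2d_pt_mult; auto. apply continuity_2d_pt_inv; auto.
Qed.

Lemma cont_ln y : 0 < y -> continuity_pt ln y.
Proof. intros H; apply derivable_continuous_pt; exists (/y); apply derivable_pt_lim_ln; auto. Qed.

Ltac cont2 :=
  cbv beta;
  match goal with
  | |- continuity_2d_pt (fun _ _ => ?c) _ _ => apply continuity_2d_pt_const
  | |- continuity_2d_pt (fun u _ => u) _ _ => apply continuity_2d_pt_id1
  | |- continuity_2d_pt (fun _ v => v) _ _ => apply continuity_2d_pt_id2
  | |- continuity_2d_pt (fun u v => @?f u v + @?g u v) _ _ => apply (continuity_2d_pt_plus f g); cont2
  | |- continuity_2d_pt (fun u v => @?f u v - @?g u v) _ _ => apply (continuity_2d_pt_minus f g); cont2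
  | |- continuity_2d_pt (fun u v => @?f u v * @?g u v) _ _ => apply (continuity_2d_pt_mult f g); cont2
  | |- continuity_2d_pt (fun u v => @?f u v / @?g u v) _ _ => apply (c2_div f g); [cont2|cont2|]
  | |- continuity_2d_pt (fun u v => - @?f u v) _ _ => apply (continuity_2d_pt_opp f); cont2
  | |- continuity_2d_pt (fun u v => / @?f u v) _ _ => apply (continuity_2d_pt_inv f); [cont2|]
  | |- continuity_2d_pt (fun u v => (@?f u v) ^ ?n) _ _ =>
      apply (continuity_1d_2d_pt_comp (fun z => z ^ n) f);
      [apply derivable_continuous_pt; apply derivable_pt_pow | cont2]
  | |- continuity_2d_pt (fun u v => exp (@?f u v)) _ _ =>
      apply (continuity_1d_2d_pt_comp exp f);
      [apply derivable_continuous_pt; apply derivable_pt_exp | cont2]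
  | |- continuity_2d_pt (fun u v => ln (@?f u v)) _ _ =>
      apply (continuity_1d_2d_pt_comp ln f); [apply cont_ln | cont2]
  | |- continuity_2d_pt (fun u v => Rpower (@?f u v) (@?g u v)) _ _ =>
      unfold Rpower; cont2
  | |- continuity_2d_pt (fun u v => ?F (@?g u v) (@?h u v)) _ _ =>
      apply (c2_comp F g h); [| cont2 | cont2]
  | _ => idtac
  end.

Lemma diff_u (D : R -> R -> Prop) (u ut ux : R -> R -> R) t x :
  open2 D ->
  (forall s y, D s y -> derivable_pt_lim (fun z => u z y) s (ut s y) /\
                        derivable_pt_lim (fun z => u s z) y (ux s y)) ->
  D t x -> cont2_at ut t x -> differentiable_pt_lim u t x (ut t x) (ux t x).
Proof.
intros HD Hder Hd Hc.
apply filterdiff_differentiable_pt_lim.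
eapply filterdiff_ext_lin.
- apply (is_derive_filterdiff u t x ut (ux t x)).
  + apply locally_2d_locally with (P := fun s y => is_derive (fun z => u z y) s (ut s y)).
    destruct (HD t x Hd) as [d [Hd0 Hd']]. exists (mkposreal d Hd0). simpl.
    intros; apply is_derive_Reals; apply Hder; apply Hd'; auto.
  + apply is_derive_Reals; apply Hder; auto.
  + apply continuity_2d_pt_filterlim; apply cont2_iff; auto.
- intros y; reflexivity.
Qed.

Definition Ef b eps t x := Rpower (1+eps*t) (-b) * exp (-eps*x/(1+eps*t)).

Lemma Ef_dt b eps t x : 0 < 1+eps*t ->
  derivable_pt_lim (fun s => Ef b eps s x) t
    (Ef b eps t x * (-b*eps/(1+eps*t) + eps^2*x/(1+eps*t)^2)).
Proof.
intros Ha. apply is_derive_Reals. unfold Ef, Rpower. auto_derive.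
- repeat split; lra.
- unfold Rdiv; field. lra.
Qed.

Lemma Ef_dx b eps t x : 0 < 1+eps*t ->
  derivable_pt_lim (fun y => Ef b eps t y) x (Ef b eps t x * (-eps/(1+eps*t))).
Proof.
intros Ha. apply is_derive_Reals. unfold Ef, Rpower. auto_derive.
- repeat split; lra.
- unfold Rdiv; field. lra.
Qed.

Lemma derivable_eq f x l l' : derivable_pt_lim f x l -> l = l' -> derivable_pt_lim f x l'.
Proof. intros H ->; exact H. Qed.
Lemma dmult f g x df dg : derivable_pt_lim f x df -> derivable_pt_lim g x dg ->
  derivable_pt_lim (fun s => f s * g s) x (df * g x + f x * dg).
Proof. intros; apply (derivable_pt_lim_mult f g x df dg); auto. Qed.
Lemma dplus f g x df dg : derivable_pt_lim f x df -> derivable_pt_lim g x dg ->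
  derivable_pt_lim (fun s => f s + g s) x (df + dg).
Proof. intros; apply (derivable_pt_lim_plus f g x df dg); auto. Qed.
Lemma dminus f g x df dg : derivable_pt_lim f x df -> derivable_pt_lim g x dg ->
  derivable_pt_lim (fun s => f s - g s) x (df - dg).
Proof. intros; apply (derivable_pt_lim_minus f g x df dg); auto. Qed.
Lemma dconstl c f x df : derivable_pt_lim f x df ->
  derivable_pt_lim (fun s => c * f s) x (c * df).
Proof. intros; apply (derivable_pt_lim_scal f c x df); auto. Qed.
Lemma ddivc c f x df : derivable_pt_lim f x df ->
  derivable_pt_lim (fun s => f s / c) x (df / c).
Proof.
intros H. apply derivable_eq with (/c * df); [|unfold Rdiv; ring].
eapply (derivable_pt_lim_ext (fun s => /c * f s)); [intros; unfold Rdiv; ring|].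
apply dconstl; auto.
Qed.
Lemma dcomp f g x df dg : derivable_pt_lim g x dg -> derivable_pt_lim f (g x) df ->
  derivable_pt_lim (fun s => f (g s)) x (df * dg).
Proof. intros; apply (derivable_pt_lim_comp g f); auto. Qed.

Lemma part1 b eps (D : R -> R -> Prop) (u : R -> R -> R) :
  open2 D -> is_solution b D u -> is_solution b (transf_dom eps D) (transf b eps u).
Proof.
intros HD [ut [ux [uxx H]]].
exists (fun t x => Ef b eps t x *
   ((-b*eps/(1+eps*t) + eps^2*x/(1+eps*t)^2) * u (t/(1+eps*t)) (x/(1+eps*t)^2)
    + ut (t/(1+eps*t)) (x/(1+eps*t)^2) / (1+eps*t)^2
    - 2*eps*x/(1+eps*t)^3 * ux (t/(1+eps*t)) (x/(1+eps*t)^2))),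
  (fun t x => Ef b eps t x *
   (-eps/(1+eps*t) * u (t/(1+eps*t)) (x/(1+eps*t)^2)
    + ux (t/(1+eps*t)) (x/(1+eps*t)^2) / (1+eps*t)^2)),
  (fun t x => Ef b eps t x *
   (eps^2/(1+eps*t)^2 * u (t/(1+eps*t)) (x/(1+eps*t)^2)
    - 2*eps/(1+eps*t)^3 * ux (t/(1+eps*t)) (x/(1+eps*t)^2)
    + uxx (t/(1+eps*t)) (x/(1+eps*t)^2) / (1+eps*t)^4)).
intros t x [Ha Hd].
destruct (H _ _ Hd) as (Dt & Dx & Dxx & Ct & Cx & Cxx & Eq).
assert (Hdiff := diff_u D u ut ux _ _ HD
   (fun s y h => conj (proj1 (H s y h)) (proj1 (proj2 (H s y h)))) Hd Ct).
assert (Cu : continuity_2d_pt u (t/(1+eps*t)) (x/(1+eps*t)^2)).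
{ apply differentiable_continuity_pt; do 2 eexists; eauto. }
assert (Hne : 1 + eps*t <> 0) by lra.
assert (Htau : derivable_pt_lim (fun s => s/(1+eps*s)) t (/(1+eps*t)^2)).
{ apply is_derive_Reals; auto_derive; [repeat split; auto; try lra|]. field; auto. }
assert (Hxi : derivable_pt_lim (fun s => x/(1+eps*s)^2) t (-2*eps*x/(1+eps*t)^3)).
{ apply is_derive_Reals; auto_derive; [repeat split; auto; try lra|]. field; auto. }
assert (Hy : forall y, derivable_pt_lim (fun z => z/(1+eps*t)^2) y (/(1+eps*t)^2)).
{ intros y; apply is_derive_Reals; auto_derive; [repeat split; auto; try lra|]. field; auto. }
apply cont2_iff in Ct; apply cont2_iff in Cx; apply cont2_iff in Cxx.
repeat split.
- unfold transf. eapply derivable_eq.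
  + apply dmult; [apply Ef_dt; auto|].
    apply (derivable_pt_lim_comp_2d u (fun s => s/(1+eps*s)) (fun s => x/(1+eps*s)^2)); eauto.
  + cbv beta. unfold Ef; field; repeat split; auto; apply pow_nonzero; auto.
- unfold transf. eapply derivable_eq.
  + apply dmult; [apply Ef_dx; auto|].
    apply (dcomp (u (t/(1+eps*t))) (fun z => z/(1+eps*t)^2)); [apply Hy|apply Dx].
  + cbv beta. unfold Ef; field; repeat split; auto; apply pow_nonzero; auto.
- eapply derivable_eq.
  + apply dmult; [apply Ef_dx; auto|].
    apply dplus.
    * apply dconstl. apply (dcomp (u (t/(1+eps*t))) (fun z => z/(1+eps*t)^2)); [apply Hy|apply Dx].
    * apply ddivc. apply (dcomp (ux (t/(1+eps*t))) (fun z => z/(1+eps*t)^2)); [apply Hy|apply Dxx].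
  + cbv beta. unfold Ef; field; repeat split; auto; apply pow_nonzero; auto.
- apply cont2_iff. unfold Ef. cont2; auto; try lra; try (apply pow_nonzero; lra).
- apply cont2_iff. unfold Ef. cont2; auto; try lra; try (apply pow_nonzero; lra).
- apply cont2_iff. unfold Ef. cont2; auto; try lra; try (apply pow_nonzero; lra).
- rewrite Eq. field; repeat split; auto; apply pow_nonzero; auto.
Qed.

Lemma sol_dom b (D D' : R -> R -> Prop) u :
  (forall t x, D' t x -> D t x) -> is_solution b D u -> is_solution b D' u.
Proof.
intros HDD [ut [ux [uxx H]]]. exists ut, ux, uxx. intros t x Hd. apply H, HDD, Hd.
Qed.

Lemma sol_ext b (D : R -> R -> Prop) (u v : R -> R -> R) :
  open2 D -> (forall t x, D t x -> u t x = v t x) ->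
  is_solution b D u -> is_solution b D v.
Proof.
intros HD Heq [ut [ux [uxx H]]]. exists ut, ux, uxx. intros t x Hd.
destruct (H t x Hd) as (Dt & Dx & R1).
assert (L : locally_2d (fun s y => u s y = v s y) t x).
{ destruct (HD t x Hd) as [d [Hd0 Hd']]. exists (mkposreal d Hd0). simpl.
  intros; apply Heq, Hd'; auto. }
split; [|split; [|exact R1]].
- apply is_derive_Reals. apply (is_derive_ext_loc (fun s => u s x)).
  + apply (locally_2d_1d_const_y (fun s y => u s y = v s y) t x L).
  + apply is_derive_Reals; auto.
- apply is_derive_Reals. apply (is_derive_ext_loc (fun y => u t y)).
  + apply (locally_2d_1d_const_x (fun s y => u s y = v s y) t x L).
  + apply is_derive_Reals; auto.
Qed.

Lemma open_D0 : open2 (fun _ x => 0 < x).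
Proof.
intros t x Hx. exists x. split; auto. intros s y _ Hy.
apply Rabs_def2 in Hy. lra.
Qed.

Lemma open_D1 eps : open2 (fun t x => 0 < x /\ 0 < 1 + eps * t).
Proof.
intros t x [Hx Ha].
set (k := (1 + eps*t) / (Rabs eps + 1)).
assert (HR : 0 <= Rabs eps) by apply Rabs_pos.
assert (Hk : k * (Rabs eps + 1) = 1 + eps*t) by (unfold k; field; lra).
assert (Hk0 : 0 < k) by (unfold k; apply Rdiv_lt_0_compat; lra).
exists (Rmin x k). split; [apply Rmin_pos; auto|].
intros s y Hs Hy. split.
- assert (Rabs (y - x) < x) by (eapply Rlt_le_trans; [exact Hy| apply Rmin_l]).
  apply Rabs_def2 in H. lra.
- assert (H1 : Rabs (s - t) < k) by (eapply Rlt_le_trans; [exact Hs| apply Rmin_r]).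
  assert (H2 : Rabs (eps * (s - t)) < 1 + eps*t).
  { rewrite Rabs_mult. assert (0 <= Rabs (s-t)) by apply Rabs_pos. nra. }
  apply Rabs_def2 in H2. lra.
Qed.

Lemma base1 b c0 c1 : is_solution b (fun _ x => 0 < x)
  (fun _ x => c0 + c1 * Rpower x (1 - b)).
Proof.
exists (fun _ _ => 0), (fun _ x => c1 * ((1 - b) * Rpower x (-b))),
  (fun _ x => c1 * ((1 - b) * (-b * Rpower x (-b - 1)))).
intros t x Hx. repeat split.
- apply derivable_pt_lim_const.
- eapply derivable_eq.
  + apply dplus; [apply derivable_pt_lim_const|]. apply dconstl.
    apply derivable_pt_lim_power; auto.
  + replace (1 - b - 1) with (-b) by ring. ring.
- apply dconstl, dconstl. apply derivable_pt_lim_power; auto.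
- apply cont2_iff; cont2.
- apply cont2_iff; cont2; auto.
- apply cont2_iff; cont2; auto.
- assert (E : Rpower x (-b) = x * Rpower x (-b - 1)).
  { replace (-b) with (1 + (-b-1)) at 1 by ring. rewrite Rpower_plus, Rpower_1; auto. }
  rewrite E. ring.
Qed.

Lemma base2 c0 c1 : is_solution 1 (fun _ x => 0 < x)
  (fun _ x => c0 + c1 * (ln x / 2)).
Proof.
exists (fun _ _ => 0), (fun _ x => c1 / (2 * x)), (fun _ x => - c1 / (2 * x ^ 2)).
intros t x Hx. repeat split.
- apply derivable_pt_lim_const.
- apply is_derive_Reals. auto_derive; auto. field; lra.
- apply is_derive_Reals. auto_derive; [lra|]. field; lra.
- apply cont2_iff; cont2.
- apply cont2_iff; cont2; lra.
- apply cont2_iff; cont2; try lra. apply Rmult_integral_contrapositive; split; [lra|]. apply pow_nonzero; lra.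
- field; lra.
Qed.

Lemma ln_sqrt' x : 0 < x -> ln (sqrt x) = ln x / 2.
Proof.
intros Hx. assert (Hs : 0 < sqrt x) by (apply sqrt_lt_R0; auto).
replace (ln x) with (ln (sqrt x * sqrt x)) by (rewrite sqrt_sqrt; lra).
rewrite ln_mult; auto. field.
Qed.

Theorem mainTheorem14 (b eps : R) (hb : 0 < b) :
  (forall (D : R -> R -> Prop) (u : R -> R -> R),
      open2 D -> is_solution b D u ->
      is_solution b (transf_dom eps D) (transf b eps u))
  /\
  (forall c0 c1 : R, b <> 1 ->
      is_solution b (fun t x => 0 < x /\ 0 < 1 + eps * t)
        (fun t x => Rpower (1 + eps * t) (- b) * exp (- eps * x / (1 + eps * t))
           * (c0 + c1 * Rpower (1 + eps * t) (2 * (b - 1)) * Rpower x (1 - b))))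
  /\
  (forall c0 c1 : R, b = 1 ->
      is_solution b (fun t x => 0 < x /\ 0 < 1 + eps * t)
        (fun t x => Rpower (1 + eps * t) (- 1) * exp (- eps * x / (1 + eps * t))
           * (c0 + c1 * ln (sqrt x / (1 + eps * t))))).
Proof.
split; [|split].
- intros; apply part1; auto.
- intros c0 c1 _.
  eapply sol_ext; [apply open_D1| |].
  2: { eapply sol_dom; [|apply (part1 b eps _ _ open_D0 (base1 b c0 c1))].
       intros t x [Hx Ha]. split; auto. apply Rdiv_lt_0_compat; auto.
       apply pow_lt; auto. }
  intros t x [Hx Ha]. unfold transf. cbv beta.
  assert (K : Rpower (x / (1 + eps * t) ^ 2) (1 - b) =
              Rpower (1 + eps * t) (2 * (b - 1)) * Rpower x (1 - b)).
  { assert (Hp : 0 < (1+eps*t)^2) by (apply pow_lt; auto).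
    unfold Rpower. rewrite ln_div by auto. rewrite ln_pow by auto.
    rewrite <- exp_plus. f_equal. simpl INR. ring. }
  rewrite K. ring.
- intros c0 c1 Hb. subst b.
  eapply sol_ext; [apply open_D1| |].
  2: { eapply sol_dom; [|apply (part1 1 eps _ _ open_D0 (base2 c0 c1))].
       intros t x [Hx Ha]. split; auto. apply Rdiv_lt_0_compat; auto.
       apply pow_lt; auto. }
  intros t x [Hx Ha]. unfold transf. cbv beta.
  assert (Hs : 0 < sqrt x) by (apply sqrt_lt_R0; auto).
  assert (Hp : 0 < (1+eps*t)^2) by (apply pow_lt; auto).
  rewrite !ln_div by auto. rewrite ln_pow by auto. rewrite ln_sqrt' by auto.
  simpl INR. f_equal. field.
Qed.
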